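(* (i) Let $\mathcal{F}$ be a nonempty set of bivariate distributions and let $\mathcal{F}_{X,Y}=\{(F(\cdot,\infty),F(\infty,\cdot)) : F\in\mathcal{F}\}$ be the set of pairs of margins occurring in $\mathcal{F}$. For $F_{X,Y}=(F_X,F_Y)\in\mathcal{F}_{X,Y}$ let $\mathcal{F}^{F_{X,Y}}$ be the set of members of $\mathcal{F}$ with margins $F_X,F_Y$, and let $\underline{\mathcal{F}}^{F_{X,Y}}$ and $\overline{\mathcal{F}}^{F_{X,Y}}$ be its pointwise infimum and supremum. Then there exists a family $\{(P_{F_{X,Y}},Q_{F_{X,Y}}) : F_{X,Y}\in\mathcal{F}_{X,Y}\}$ of coherent imprecise copulas such that $\underline{\mathcal{F}}^{F_{X,Y}}(x,y)=P_{F_{X,Y}}(F_X(x),F_Y(y))$ and $\overline{\mathcal{F}}^{F_{X,Y}}(x,y)=Q_{F_{X,Y}}(F_X(x),F_Y(y))$ for every $F_{X,Y}\in\mathcal{F}_{X,Y}$ and all $x,y\in\overline{\mathbb{R}}$. (ii) Let $\mathcal{F}_X,\mathcal{F}_Y$ be nonempty sets of univariate distributions, let $\mathcal{F}_{X,Y}\subseteq\mathcal{F}_X\times\mathcal{F}_Y$ be nonempty, and let $\{(P_{F_{X,Y}},Q_{F_{X,Y}})\}_{F_{X,Y}\in\mathcal{F}_{X,Y}}$ be a family of coherent imprecise copulas. Then $\mathcal{F}=\{C(F_X,F_Y) : (F_X,F_Y)\in\mathcal{F}_{X,Y},\ C\in\mathcal{C}(P_{F_{X,Y}},Q_{F_{X,Y}})\}$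 is a nonempty set of bivariate distributions.
   Context: $\overline{\mathbb{R}}=\mathbb{R}\cup\{-\infty,\infty\}$. A univariate distribution is a nondecreasing $G:\overline{\mathbb{R}}\to[0,1]$ with $G(-\infty)=0$, $G(\infty)=1$ (not necessarily right continuous). A bivariate distribution is $F:\overline{\mathbb{R}}^2\to[0,1]$ with $F(x,-\infty)=F(-\infty,y)=0$, $F(\infty,\infty)=1$ and $F(x_1,y_1)+F(x_2,y_2)-F(x_2,y_1)-F(x_1,y_2)\geqslant 0$ for all $x_1\leqslant x_2$, $y_1\leqslant y_2$; its margins are $F(\cdot,\infty)$ and $F(\infty,\cdot)$. A quasi-copula is $Q:[0,1]^2\to[0,1]$ with $Q(u,0)=Q(0,v)=0$, $Q(u,1)=u$, $Q(1,v)=v$, nondecreasing in each variable, and $|Q(u_1,v_1)-Q(u_2,v_2)|\leqslant|u_1-u_2|+|v_1-v_2|$; a copula is a quasi-copula with nonnegative volume of every rectangle in $[0,1]^2$. For quasi-copulas $P\leqslant Q$, $\mathcal{C}(P,Q)$ is the set of copulas $C$ with $P\leqslant C\leqslant Q$. A coherent imprecise copula is a pair of quasi-copulas $P\leqslant Q$ with $P=\inf\mathcal{C}(P,Q)$ and $Q=\sup\mathcal{C}(P,Q)$ (pointwise). $C(F_X,F_Y)$ denotes $(x,y)\mapsto C(F_X(x),F_Y(y))$. *)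

(* Defs.v *)
From Stdlib Require Import Reals.
From Coquelicot Require Export Rbar.
Open Scope R_scope.

Definition univariate_distribution (G : Rbar -> R) : Prop :=
  (forall x, 0 <= G x <= 1) /\
  (forall x y, Rbar_le x y -> G x <= G y) /\
  G m_infty = 0 /\ G p_infty = 1.

Definition bivariate_distribution (F : Rbar -> Rbar -> R) : Prop :=
  (forall x y, 0 <= F x y <= 1) /\
  (forall x, F x m_infty = 0) /\ (forall y, F m_infty y = 0) /\
  F p_infty p_infty = 1 /\
  (forall x1 x2 y1 y2, Rbar_le x1 x2 -> Rbar_le y1 y2 ->
     F x1 y1 + F x2 y2 - F x2 y1 - F x1 y2 >= 0).

Definition margin_X (F : Rbar -> Rbar -> R) : Rbar -> R := fun x => F x p_infty.
Definition margin_Y (F : Rbar -> Rbar -> R) : Rbar -> R := fun y => F p_infty y.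

Definition in01 (u : R) : Prop := 0 <= u <= 1.

(* Quasi-copula; only values on [0,1]^2 are relevant. *)
Definition quasi_copula (Q : R -> R -> R) : Prop :=
  (forall u v, in01 u -> in01 v -> in01 (Q u v)) /\
  (forall u, in01 u -> Q u 0 = 0) /\ (forall v, in01 v -> Q 0 v = 0) /\
  (forall u, in01 u -> Q u 1 = u) /\ (forall v, in01 v -> Q 1 v = v) /\
  (forall u1 u2 v, in01 u1 -> in01 u2 -> in01 v -> u1 <= u2 -> Q u1 v <= Q u2 v) /\
  (forall u v1 v2, in01 u -> in01 v1 -> in01 v2 -> v1 <= v2 -> Q u v1 <= Q u v2) /\
  (forall u1 u2 v1 v2, in01 u1 -> in01 u2 -> in01 v1 -> in01 v2 ->
     Rabs (Q u1 v1 - Q u2 v2) <= Rabs (u1 - u2) + Rabs (v1 - v2)).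

Definition copula (C : R -> R -> R) : Prop :=
  quasi_copula C /\
  (forall u1 u2 v1 v2, in01 u1 -> in01 u2 -> in01 v1 -> in01 v2 ->
     u1 <= u2 -> v1 <= v2 -> C u1 v1 + C u2 v2 - C u2 v1 - C u1 v2 >= 0).

Definition qle (P Q : R -> R -> R) : Prop :=
  forall u v, in01 u -> in01 v -> P u v <= Q u v.

Definition copulas_between (P Q : R -> R -> R) (C : R -> R -> R) : Prop :=
  copula C /\ qle P C /\ qle C Q.

Definition is_glb (E : R -> Prop) (m : R) : Prop :=
  (forall x, E x -> m <= x) /\ (forall b, (forall x, E x -> b <= x) -> b <= m).

Definition coherent_imprecise_copula (P Q : R -> R -> R) : Prop :=
  quasi_copula P /\ quasi_copula Q /\ qle P Q /\
  (forall u v, in01 u -> in01 v ->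
     is_glb (fun t => exists C, copulas_between P Q C /\ t = C u v) (P u v)) /\
  (forall u v, in01 u -> in01 v ->
     is_lub (fun t => exists C, copulas_between P Q C /\ t = C u v) (Q u v)).

Definition compose_copula (C : R -> R -> R) (FX FY : Rbar -> R) : Rbar -> Rbar -> R :=
  fun x y => C (FX x) (FY y).

(* Main.v *)
Require Import Defs.
From Stdlib Require Import Reals Lra Classical ClassicalEpsilon.
From Coquelicot Require Import Rbar Rcomplements.
Open Scope R_scope.

Lemma abs_le a b : Rabs a <= b -> -b <= a <= b.
Proof. intros H; apply Rabs_le_between; exact H. Qed.
Lemma abs_lt a b : Rabs a < b -> -b < a < b.
Proof. unfold Rabs; destruct (Rcase_abs a); intros; lra. Qed.
Lemma le_abs a b : -b <= a <= b -> Rabs a <= b.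
Proof. intros; apply Rabs_le_between; lra. Qed.
Lemma abs_ge a : a <= Rabs a /\ - a <= Rabs a.
Proof. unfold Rabs; destruct (Rcase_abs a); lra. Qed.

Lemma Rbar_le_pinf x : Rbar_le x p_infty.
Proof. destruct x; simpl; auto. Qed.
Lemma Rbar_le_minf x : Rbar_le m_infty x.
Proof. destruct x; simpl; auto. Qed.

Lemma copula_of (C : R -> R -> R) :
  (forall u, in01 u -> C u 0 = 0) -> (forall v, in01 v -> C 0 v = 0) ->
  (forall u, in01 u -> C u 1 = u) -> (forall v, in01 v -> C 1 v = v) ->
  (forall u1 u2 v1 v2, in01 u1 -> in01 u2 -> in01 v1 -> in01 v2 ->
     u1 <= u2 -> v1 <= v2 -> C u1 v1 + C u2 v2 - C u2 v1 - C u1 v2 >= 0) ->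
  copula C.
Proof.
  intros H0 H0' H1 H1' H2.
  assert (I0 : in01 0) by (unfold in01; lra).
  assert (I1 : in01 1) by (unfold in01; lra).
  assert (MU : forall u1 u2 v, in01 u1 -> in01 u2 -> in01 v -> u1 <= u2 -> C u1 v <= C u2 v).
  { intros u1 u2 v a b c d. pose proof (H2 u1 u2 0 v a b I0 c d (proj1 c)).
    rewrite !H0 in H by auto. lra. }
  assert (MV : forall u v1 v2, in01 u -> in01 v1 -> in01 v2 -> v1 <= v2 -> C u v1 <= C u v2).
  { intros u v1 v2 a b c d. pose proof (H2 0 u v1 v2 I0 a b c (proj1 a) d).
    rewrite !H0' in H by auto. lra. }
  assert (LU : forall u1 u2 v, in01 u1 -> in01 u2 -> in01 v -> u1 <= u2 -> C u2 v - C u1 v <= u2 - u1).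
  { intros u1 u2 v a b c d. pose proof (H2 u1 u2 v 1 a b c I1 d (proj2 c)).
    rewrite !H1 in H by auto. lra. }
  assert (LV : forall u v1 v2, in01 u -> in01 v1 -> in01 v2 -> v1 <= v2 -> C u v2 - C u v1 <= v2 - v1).
  { intros u v1 v2 a b c d. pose proof (H2 u 1 v1 v2 a I1 b c (proj2 a) d).
    rewrite !H1' in H by auto. lra. }
  assert (AU : forall u1 u2 v, in01 u1 -> in01 u2 -> in01 v -> Rabs (C u1 v - C u2 v) <= Rabs (u1 - u2)).
  { intros u1 u2 v a b c. pose proof (abs_ge (u1 - u2)). apply le_abs.
    destruct (Rle_dec u1 u2).
    - pose proof (MU u1 u2 v a b c r); pose proof (LU u1 u2 v a b c r); lra.
    - pose proof (MU u2 u1 v b a c ltac:(lra)); pose proof (LU u2 u1 v b a c ltac:(lra)); lra. }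
  assert (AV : forall u v1 v2, in01 u -> in01 v1 -> in01 v2 -> Rabs (C u v1 - C u v2) <= Rabs (v1 - v2)).
  { intros u v1 v2 a b c. pose proof (abs_ge (v1 - v2)). apply le_abs.
    destruct (Rle_dec v1 v2).
    - pose proof (MV u v1 v2 a b c r); pose proof (LV u v1 v2 a b c r); lra.
    - pose proof (MV u v2 v1 a c b ltac:(lra)); pose proof (LV u v2 v1 a c b ltac:(lra)); lra. }
  split; [|exact H2].
  split; [|split; [|split; [|split; [|split; [|split; [|split]]]]]]; auto.
  - intros u v a b. pose proof (MU 0 u v I0 a b (proj1 a)) as E1. pose proof (MU u 1 v a I1 b (proj2 a)) as E2.
    rewrite H0' in E1 by auto. rewrite H1' in E2 by auto. unfold in01 in *; lra.
  - intros u1 u2 v1 v2 a b c d.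
    pose proof (AU u1 u2 v1 a b c) as E1. pose proof (AV u2 v1 v2 b c d) as E2.
    pose proof (Rabs_triang (C u1 v1 - C u2 v1) (C u2 v1 - C u2 v2)) as E3.
    replace (C u1 v1 - C u2 v1 + (C u2 v1 - C u2 v2)) with (C u1 v1 - C u2 v2) in E3 by ring.
    lra.
Qed.

Lemma lub_ex (E : R -> Prop) : exists m,
  (exists x, E x) -> (exists b, forall x, E x -> x <= b) -> is_lub E m.
Proof.
  destruct (classic ((exists x, E x) /\ (exists b, forall x, E x -> x <= b))) as [[H1 H2]|H].
  - destruct (completeness E) as [m Hm]; [destruct H2 as [b Hb]; exists b; exact Hb|exact H1|].
    exists m; auto.
  - exists 0; intros; exfalso; auto.
Qed.

Lemma glb_ex (E : R -> Prop) : exists m,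
  (exists x, E x) -> (exists b, forall x, E x -> b <= x) -> is_glb E m.
Proof.
  destruct (lub_ex (fun y => E (- y))) as [m Hm].
  exists (- m). intros [x Hx] [b Hb].
  destruct Hm as [Hm1 Hm2].
  - exists (- x). rewrite Ropp_involutive; auto.
  - exists (- b). intros y Hy. pose proof (Hb _ Hy); lra.
  - split.
    + intros y Hy. assert (E (- - y)) by (rewrite Ropp_involutive; auto).
      pose proof (Hm1 _ H). lra.
    + intros c Hc. assert (m <= - c).
      { apply Hm2. intros y Hy. pose proof (Hc _ Hy); lra. }
      lra.
Qed.

Definition lubf (E : R -> Prop) : R := proj1_sig (constructive_indefinite_description _ (lub_ex E)).
Definition glbf (E : R -> Prop) : R := proj1_sig (constructive_indefinite_description _ (glb_ex E)).

Lemma lubf_spec E : (exists x, E x) -> (exists b, forall x, E x -> x <= b) -> is_lub E (lubf E).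
Proof. unfold lubf; destruct constructive_indefinite_description; simpl; auto. Qed.
Lemma glbf_spec E : (exists x, E x) -> (exists b, forall x, E x -> b <= x) -> is_glb E (glbf E).
Proof. unfold glbf; destruct constructive_indefinite_description; simpl; auto. Qed.

Lemma biv_incx F x1 x2 y : bivariate_distribution F -> Rbar_le x1 x2 ->
  0 <= F x2 y - F x1 y <= F x2 p_infty - F x1 p_infty.
Proof.
  intros (H0 & Hx & Hy & H1 & H2) Hle. split.
  - pose proof (H2 x1 x2 m_infty y Hle (Rbar_le_minf y)). rewrite !Hx in H. lra.
  - pose proof (H2 x1 x2 y p_infty Hle (Rbar_le_pinf y)). lra.
Qed.
Lemma biv_incy F x y1 y2 : bivariate_distribution F -> Rbar_le y1 y2 ->
  0 <= F x y2 - F x y1 <= F p_infty y2 - F p_infty y1.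
Proof.
  intros (H0 & Hx & Hy & H1 & H2) Hle. split.
  - pose proof (H2 m_infty x y1 y2 (Rbar_le_minf x) Hle). rewrite !Hy in H. lra.
  - pose proof (H2 x p_infty y1 y2 (Rbar_le_pinf x) Hle). lra.
Qed.

Lemma biv_lipx F x1 x2 y : bivariate_distribution F ->
  Rabs (F x1 y - F x2 y) <= Rabs (F x1 p_infty - F x2 p_infty).
Proof.
  intros HF. destruct (Rbar_le_lt_dec x1 x2) as [h|h].
  - pose proof (biv_incx F x1 x2 y HF h). pose proof (abs_ge (F x1 p_infty - F x2 p_infty)).
    apply le_abs; lra.
  - pose proof (biv_incx F x2 x1 y HF (Rbar_lt_le _ _ h)). pose proof (abs_ge (F x1 p_infty - F x2 p_infty)).
    apply le_abs; lra.
Qed.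
Lemma biv_lipy F x y1 y2 : bivariate_distribution F ->
  Rabs (F x y1 - F x y2) <= Rabs (F p_infty y1 - F p_infty y2).
Proof.
  intros HF. destruct (Rbar_le_lt_dec y1 y2) as [h|h].
  - pose proof (biv_incy F x y1 y2 HF h). pose proof (abs_ge (F p_infty y1 - F p_infty y2)).
    apply le_abs; lra.
  - pose proof (biv_incy F x y2 y1 HF (Rbar_lt_le _ _ h)). pose proof (abs_ge (F p_infty y1 - F p_infty y2)).
    apply le_abs; lra.
Qed.
Lemma biv_lip F x1 x2 y1 y2 : bivariate_distribution F ->
  Rabs (F x1 y1 - F x2 y2) <= Rabs (F x1 p_infty - F x2 p_infty) + Rabs (F p_infty y1 - F p_infty y2).
Proof.
  intros HF. pose proof (biv_lipx F x1 x2 y1 HF). pose proof (biv_lipy F x2 y1 y2 HF).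
  pose proof (Rabs_triang (F x1 y1 - F x2 y1) (F x2 y1 - F x2 y2)) as E3.
  replace (F x1 y1 - F x2 y1 + (F x2 y1 - F x2 y2)) with (F x1 y1 - F x2 y2) in E3 by ring.
  lra.
Qed.

Lemma biv_mx F x1 x2 : bivariate_distribution F -> Rbar_le x1 x2 -> F x1 p_infty <= F x2 p_infty.
Proof. intros HF h; pose proof (biv_incx F x1 x2 p_infty HF h); lra. Qed.
Lemma biv_my F y1 y2 : bivariate_distribution F -> Rbar_le y1 y2 -> F p_infty y1 <= F p_infty y2.
Proof. intros HF h; pose proof (biv_incy F p_infty y1 y2 HF h); lra. Qed.

Definition cl (G : Rbar -> R) (u : R) : Prop :=
  forall eps, 0 < eps -> exists x, Rabs (G x - u) < eps.

Lemma cl_zero G u d : cl G u -> (forall x, Rabs d <= 2 * Rabs (G x - u)) -> d = 0.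
Proof.
  intros Hc Hd. destruct (Req_dec d 0) as [e|ne]; auto.
  pose proof (Rabs_pos_lt d ne).
  destruct (Hc (Rabs d / 4)) as [x Hx]; [lra|].
  pose proof (Hd x). lra.
Qed.

Lemma Sbar_ex F u v : exists c, bivariate_distribution F -> forall x y,
  Rabs (c - F x y) <= Rabs (F x p_infty - u) + Rabs (F p_infty y - v).
Proof.
  set (E := fun t => exists x y, t = F x y + Rabs (F x p_infty - u) + Rabs (F p_infty y - v)).
  destruct (glb_ex E) as [c Hc]. exists c. intros HF.
  assert (F0 : forall x y, 0 <= F x y) by (intros; destruct HF as [H _]; apply H).
  destruct Hc as [Hc1 Hc2].
  { exists (F p_infty p_infty + Rabs (F p_infty p_infty - u) + Rabs (F p_infty p_infty - v)).
    exists p_infty, p_infty; reflexivity. }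
  { exists 0. intros t [x [y ->]]. pose proof (F0 x y). pose proof (Rabs_pos (F x p_infty - u)).
    pose proof (Rabs_pos (F p_infty y - v)). lra. }
  intros x y. apply le_abs. split.
  - assert (F x y - Rabs (F x p_infty - u) - Rabs (F p_infty y - v) <= c); [|lra].
    apply Hc2. intros t [x' [y' ->]].
    pose proof (biv_lip F x x' y y' HF).
    pose proof (Rabs_triang (F x p_infty - u) (u - F x' p_infty)).
    pose proof (Rabs_triang (F p_infty y - v) (v - F p_infty y')).
    replace (F x p_infty - u + (u - F x' p_infty)) with (F x p_infty - F x' p_infty) in H0 by ring.
    replace (F p_infty y - v + (v - F p_infty y')) with (F p_infty y - F p_infty y') in H1 by ring.
    rewrite (Rabs_minus_sym u) in H0. rewrite (Rabs_minus_sym v) in H1.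
    pose proof (abs_ge (F x y - F x' y')). lra.
  - assert (c <= F x y + Rabs (F x p_infty - u) + Rabs (F p_infty y - v)); [|lra].
    apply Hc1. exists x, y; reflexivity.
Qed.

Definition Sb F u v : R := proj1_sig (constructive_indefinite_description _ (Sbar_ex F u v)).
Lemma Sb_spec F u v : bivariate_distribution F -> forall x y,
  Rabs (Sb F u v - F x y) <= Rabs (F x p_infty - u) + Rabs (F p_infty y - v).
Proof. unfold Sb; destruct constructive_indefinite_description; simpl; auto. Qed.

Definition GX (F : Rbar -> Rbar -> R) : Rbar -> R := fun x => F x p_infty.
Definition GY (F : Rbar -> Rbar -> R) : Rbar -> R := fun y => F p_infty y.

Lemma biv_facts F : bivariate_distribution F ->
  F m_infty p_infty = 0 /\ F p_infty m_infty = 0 /\ F p_infty p_infty = 1 /\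
  (forall x, F x m_infty = 0) /\ (forall y, F m_infty y = 0) /\ (forall x y, 0 <= F x y <= 1).
Proof. intros (H0 & Hx & Hy & H1 & H2). repeat split; auto; apply H0. Qed.

Lemma Sb_range F x y : bivariate_distribution F -> Sb F (F x p_infty) (F p_infty y) = F x y.
Proof.
  intros HF. pose proof (Sb_spec F (F x p_infty) (F p_infty y) HF x y).
  rewrite !Rminus_eq_0, Rabs_R0 in H.
  pose proof (Rabs_pos (Sb F (F x p_infty) (F p_infty y) - F x y)).
  assert (Rabs (Sb F (F x p_infty) (F p_infty y) - F x y) = 0) by lra.
  apply Rabs_eq_0 in H1. lra.
Qed.

Lemma Sb_u0 F u : bivariate_distribution F -> cl (GX F) u -> Sb F u 0 = 0.
Proof.
  intros HF Hc. destruct (biv_facts F HF) as (a & b & c & d & e & f).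
  apply (cl_zero _ _ _ Hc). intros x. pose proof (Sb_spec F u 0 HF x m_infty).
  rewrite d, b, Rminus_0_r, Rminus_0_r, Rabs_R0 in H. unfold GX.
  pose proof (Rabs_pos (F x p_infty - u)). lra.
Qed.
Lemma Sb_0v F v : bivariate_distribution F -> cl (GY F) v -> Sb F 0 v = 0.
Proof.
  intros HF Hc. destruct (biv_facts F HF) as (a & b & c & d & e & f).
  apply (cl_zero _ _ _ Hc). intros y. pose proof (Sb_spec F 0 v HF m_infty y).
  rewrite e, a, Rminus_0_r, Rminus_0_r, Rabs_R0 in H. unfold GY.
  pose proof (Rabs_pos (F p_infty y - v)). lra.
Qed.
Lemma Sb_u1 F u : bivariate_distribution F -> cl (GX F) u -> Sb F u 1 = u.
Proof.
  intros HF Hc. destruct (biv_facts F HF) as (a & b & c & d & e & f).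
  assert (Sb F u 1 - u = 0); [|lra].
  apply (cl_zero _ _ _ Hc). intros x. pose proof (Sb_spec F u 1 HF x p_infty).
  rewrite c, Rminus_eq_0, Rabs_R0 in H. unfold GX.
  pose proof (Rabs_triang (Sb F u 1 - F x p_infty) (F x p_infty - u)).
  replace (Sb F u 1 - F x p_infty + (F x p_infty - u)) with (Sb F u 1 - u) in H0 by ring.
  lra.
Qed.
Lemma Sb_1v F v : bivariate_distribution F -> cl (GY F) v -> Sb F 1 v = v.
Proof.
  intros HF Hc. destruct (biv_facts F HF) as (a & b & c & d & e & f).
  assert (Sb F 1 v - v = 0); [|lra].
  apply (cl_zero _ _ _ Hc). intros y. pose proof (Sb_spec F 1 v HF p_infty y).
  rewrite c, Rminus_eq_0, Rabs_R0 in H. unfold GY.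
  pose proof (Rabs_triang (Sb F 1 v - F p_infty y) (F p_infty y - v)).
  replace (Sb F 1 v - F p_infty y + (F p_infty y - v)) with (Sb F 1 v - v) in H0 by ring.
  lra.
Qed.

Lemma Sb_2inc F u1 u2 v1 v2 : bivariate_distribution F ->
  cl (GX F) u1 -> cl (GX F) u2 -> cl (GY F) v1 -> cl (GY F) v2 -> u1 <= u2 -> v1 <= v2 ->
  Sb F u1 v1 + Sb F u2 v2 - Sb F u2 v1 - Sb F u1 v2 >= 0.
Proof.
  intros HF c1 c2 d1 d2 hu hv.
  destruct (Req_dec u1 u2) as [->|nu]; [lra|].
  destruct (Req_dec v1 v2) as [->|nv]; [lra|].
  apply Rnot_lt_ge. intros Hneg.
  set (d := - (Sb F u1 v1 + Sb F u2 v2 - Sb F u2 v1 - Sb F u1 v2)).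
  set (eps := Rmin (d / 16) (Rmin ((u2 - u1) / 3) ((v2 - v1) / 3))).
  assert (ep : 0 < eps).
  { unfold eps. repeat apply Rmin_pos; unfold d; lra. }
  assert (e1 : eps <= d / 16) by apply Rmin_l.
  assert (e2 : eps <= (u2 - u1) / 3) by (eapply Rle_trans; [apply Rmin_r|apply Rmin_l]).
  assert (e3 : eps <= (v2 - v1) / 3) by (eapply Rle_trans; [apply Rmin_r|apply Rmin_r]).
  destruct (c1 eps ep) as [x1 hx1]. destruct (c2 eps ep) as [x2 hx2].
  destruct (d1 eps ep) as [y1 hy1]. destruct (d2 eps ep) as [y2 hy2].
  unfold GX, GY in *. apply abs_lt in hx1, hx2, hy1, hy2.
  assert (lx : Rbar_le x1 x2).
  { destruct (Rbar_le_lt_dec x1 x2) as [h|h]; auto.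
    pose proof (biv_mx F _ _ HF (Rbar_lt_le _ _ h)). lra. }
  assert (ly : Rbar_le y1 y2).
  { destruct (Rbar_le_lt_dec y1 y2) as [h|h]; auto.
    pose proof (biv_my F _ _ HF (Rbar_lt_le _ _ h)). lra. }
  pose proof (proj2 (proj2 (proj2 (proj2 HF))) x1 x2 y1 y2 lx ly) as Hr.
  pose proof (abs_le _ _ (Sb_spec F u1 v1 HF x1 y1)).
  pose proof (abs_le _ _ (Sb_spec F u2 v2 HF x2 y2)).
  pose proof (abs_le _ _ (Sb_spec F u2 v1 HF x2 y1)).
  pose proof (abs_le _ _ (Sb_spec F u1 v2 HF x1 y2)).
  pose proof (abs_ge (F x1 p_infty - u1)). pose proof (abs_ge (F x2 p_infty - u2)).
  pose proof (abs_ge (F p_infty y1 - v1)). pose proof (abs_ge (F p_infty y2 - v2)).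
  assert (Rabs (F x1 p_infty - u1) < eps) by (apply Rabs_def1; lra).
  assert (Rabs (F x2 p_infty - u2) < eps) by (apply Rabs_def1; lra).
  assert (Rabs (F p_infty y1 - v1) < eps) by (apply Rabs_def1; lra).
  assert (Rabs (F p_infty y2 - v2) < eps) by (apply Rabs_def1; lra).
  unfold d in *. lra.
Qed.

Definition mgn (G : Rbar -> R) : Prop :=
  G m_infty = 0 /\ G p_infty = 1 /\ forall x, 0 <= G x <= 1.

Definition Lo (G : Rbar -> R) u := lubf (fun t => exists x, t = G x /\ t <= u).
Definition Hi (G : Rbar -> R) u := glbf (fun t => exists x, t = G x /\ u <= t).

Lemma Lo_spec G u : mgn G -> in01 u -> is_lub (fun t => exists x, t = G x /\ t <= u) (Lo G u).
Proof.
  intros (g0 & g1 & gr) hu. apply lubf_spec.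
  - exists 0, m_infty. split; auto. unfold in01 in hu; lra.
  - exists u. intros t [x [-> h]]; auto.
Qed.
Lemma Hi_spec G u : mgn G -> in01 u -> is_glb (fun t => exists x, t = G x /\ u <= t) (Hi G u).
Proof.
  intros (g0 & g1 & gr) hu. apply glbf_spec.
  - exists 1, p_infty. split; auto. unfold in01 in hu; lra.
  - exists u. intros t [x [-> h]]; auto.
Qed.

Lemma Lo_bounds G u : mgn G -> in01 u -> 0 <= Lo G u <= u.
Proof.
  intros hG hu. destruct (Lo_spec G u hG hu) as [h1 h2]. destruct hG as (g0 & g1 & gr). split.
  - apply h1. exists m_infty. split; auto. unfold in01 in hu; lra.
  - apply h2. intros t [x [-> h]]; auto.
Qed.
Lemma Hi_bounds G u : mgn G -> in01 u -> u <= Hi G u <= 1.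
Proof.
  intros hG hu. destruct (Hi_spec G u hG hu) as [h1 h2]. destruct hG as (g0 & g1 & gr). split.
  - apply h2. intros t [x [-> h]]; auto.
  - apply h1. exists p_infty. split; auto. unfold in01 in hu; lra.
Qed.

Lemma cl_Lo G u : mgn G -> in01 u -> cl G (Lo G u).
Proof.
  intros hG hu eps ep. destruct (Lo_spec G u hG hu) as [h1 h2].
  destruct (classic (exists x, G x <= u /\ Lo G u - eps < G x)) as [[x [a b]]|N].
  - exists x. assert (G x <= Lo G u) by (apply h1; exists x; auto).
    apply Rabs_def1; lra.
  - exfalso. assert (Lo G u <= Lo G u - eps); [|lra].
    apply h2. intros t [x [-> h]]. apply Rnot_lt_le. intros c. apply N; eauto.
Qed.
Lemma cl_Hi G u : mgn G -> in01 u -> cl G (Hi G u).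
Proof.
  intros hG hu eps ep. destruct (Hi_spec G u hG hu) as [h1 h2].
  destruct (classic (exists x, u <= G x /\ G x < Hi G u + eps)) as [[x [a b]]|N].
  - exists x. assert (Hi G u <= G x) by (apply h1; exists x; auto).
    apply Rabs_def1; lra.
  - exfalso. assert (Hi G u + eps <= Hi G u); [|lra].
    apply h2. intros t [x [-> h]]. apply Rnot_lt_le. intros c. apply N; eauto.
Qed.

Lemma Lo_fix G x : mgn G -> Lo G (G x) = G x.
Proof.
  intros hG. assert (hu : in01 (G x)) by (destruct hG as (_ & _ & gr); apply gr).
  destruct (Lo_spec G (G x) hG hu) as [h1 h2].
  apply Rle_antisym.
  - apply h2. intros t [y [-> h]]; auto.
  - apply h1. exists x; split; auto; lra.
Qed.

Lemma cell G u1 u2 : mgn G -> in01 u1 -> in01 u2 -> u1 <= u2 ->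
  Hi G u1 <= Lo G u2 \/ (Lo G u1 = Lo G u2 /\ Hi G u1 = Hi G u2).
Proof.
  intros hG i1 i2 le. destruct (Rle_dec (Hi G u1) (Lo G u2)) as [h|h]; [left; auto|right].
  apply Rnot_le_lt in h.
  destruct (Lo_spec G u1 hG i1) as [a1 a2]. destruct (Lo_spec G u2 hG i2) as [b1 b2].
  destruct (Hi_spec G u1 hG i1) as [c1 c2]. destruct (Hi_spec G u2 hG i2) as [d1 d2].
  split; apply Rle_antisym.
  - apply a2. intros t [x [-> hx]]. apply b1. exists x; split; auto; lra.
  - apply b2. intros t [x [-> hx]].
    assert (G x <= Lo G u2) by (apply b1; exists x; auto).
    destruct (Rle_dec u1 (G x)) as [k|k].
    + assert (Hi G u1 <= G x) by (apply c1; exists x; auto). lra.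
    + apply a1. exists x; split; auto; lra.
  - apply d2. intros t [x [-> hx]]. apply c1. exists x; split; auto; lra.
  - apply c2. intros t [x [-> hx]].
    destruct (Rle_dec u2 (G x)) as [k|k].
    + apply d1. exists x; auto.
    + assert (G x <= Lo G u2) by (apply b1; exists x; split; auto; lra).
      assert (Hi G u1 <= G x) by (apply c1; exists x; auto). lra.
Qed.

Definition lam (lo hi : R -> R) (u : R) : R :=
  if Req_EM_T (lo u) (hi u) then 0 else (u - lo u) / (hi u - lo u).
Definition interp (lo hi : R -> R) (g : R -> R) (u : R) : R :=
  g (lo u) + lam lo hi u * (g (hi u) - g (lo u)).

Lemma lam_range lo hi u : lo u <= u <= hi u -> 0 <= lam lo hi u <= 1.
Proof.
  intros h. unfold lam. destruct Req_EM_T; [lra|].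
  assert (p : 0 < hi u - lo u) by lra. split.
  - apply Rmult_le_pos; [lra|]. left; apply Rinv_0_lt_compat; auto.
  - apply (Rmult_le_reg_r (hi u - lo u)); auto. unfold Rdiv. rewrite Rmult_assoc, Rinv_l by lra. lra.
Qed.

Lemma interp_lin lo hi g1 g2 u :
  interp lo hi g2 u - interp lo hi g1 u = interp lo hi (fun k => g2 k - g1 k) u.
Proof. unfold interp; ring. Qed.

Lemma interp_ext lo hi g1 g2 u : g1 (lo u) = g2 (lo u) -> g1 (hi u) = g2 (hi u) ->
  interp lo hi g1 u = interp lo hi g2 u.
Proof. intros a b; unfold interp; rewrite a, b; reflexivity. Qed.

Lemma interp_id lo hi u : lo u <= u <= hi u -> interp lo hi (fun k => k) u = u.
Proof.
  intros h. unfold interp, lam. destruct Req_EM_T; [lra|]. field. lra.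
Qed.

Lemma interp_fix lo hi g u : lo u = u -> interp lo hi g u = g u.
Proof.
  intros h. unfold interp, lam. destruct Req_EM_T.
  - rewrite h; ring.
  - rewrite h. unfold Rdiv; rewrite Rminus_eq_0. ring.
Qed.

Lemma interp_mono (D : R -> Prop) lo hi g u1 u2 :
  (forall u, in01 u -> D (lo u) /\ D (hi u) /\ lo u <= u <= hi u) ->
  (forall u1 u2, in01 u1 -> in01 u2 -> u1 <= u2 ->
     hi u1 <= lo u2 \/ (lo u1 = lo u2 /\ hi u1 = hi u2)) ->
  (forall k1 k2, D k1 -> D k2 -> k1 <= k2 -> g k1 <= g k2) ->
  in01 u1 -> in01 u2 -> u1 <= u2 -> interp lo hi g u1 <= interp lo hi g u2.
Proof.
  intros HD Hc Hg i1 i2 le.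
  destruct (HD u1 i1) as (a1 & b1 & c1). destruct (HD u2 i2) as (a2 & b2 & c2).
  pose proof (lam_range lo hi u1 c1). pose proof (lam_range lo hi u2 c2).
  assert (m1 : g (lo u1) <= g (hi u1)) by (apply Hg; auto; lra).
  assert (m2 : g (lo u2) <= g (hi u2)) by (apply Hg; auto; lra).
  unfold interp.
  destruct (Hc u1 u2 i1 i2 le) as [h|[e1 e2]].
  - assert (g (hi u1) <= g (lo u2)) by (apply Hg; auto).
    assert (lam lo hi u1 * (g (hi u1) - g (lo u1)) <= 1 * (g (hi u1) - g (lo u1)))
      by (apply Rmult_le_compat_r; lra).
    assert (0 <= lam lo hi u2 * (g (hi u2) - g (lo u2))) by (apply Rmult_le_pos; lra).
    lra.
  - assert (lam lo hi u1 <= lam lo hi u2).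
    { unfold lam. rewrite <- e1, <- e2. destruct Req_EM_T; [lra|].
      unfold Rdiv. apply Rmult_le_compat_r; [|lra].
      left; apply Rinv_0_lt_compat; lra. }
    rewrite <- e1, <- e2 in *.
    assert (lam lo hi u1 * (g (hi u1) - g (lo u1)) <= lam lo hi u2 * (g (hi u1) - g (lo u1)))
      by (apply Rmult_le_compat_r; lra).
    lra.
Qed.

Definition Cop F u v :=
  interp (Lo (GX F)) (Hi (GX F))
    (fun k => interp (Lo (GY F)) (Hi (GY F)) (fun w => Sb F k w) v) u.

Lemma mgnX F : bivariate_distribution F -> mgn (GX F).
Proof. intros HF; destruct (biv_facts F HF) as (a & b & c & d & e & f). unfold mgn, GX; auto. Qed.
Lemma mgnY F : bivariate_distribution F -> mgn (GY F).
Proof. intros HF; destruct (biv_facts F HF) as (a & b & c & d & e & f). unfold mgn, GY; auto. Qed.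

Lemma HD_of G : mgn G -> forall u, in01 u ->
  cl G (Lo G u) /\ cl G (Hi G u) /\ Lo G u <= u <= Hi G u.
Proof.
  intros hG u hu. pose proof (Lo_bounds G u hG hu). pose proof (Hi_bounds G u hG hu).
  split; [apply cl_Lo; auto|split; [apply cl_Hi; auto|lra]].
Qed.

Lemma Lo0 G : mgn G -> Lo G 0 = 0.
Proof. intros hG. pose proof (Lo_fix G m_infty hG). destruct hG as (g0 & _). rewrite g0 in H; auto. Qed.
Lemma Lo1 G : mgn G -> Lo G 1 = 1.
Proof. intros hG. pose proof (Lo_fix G p_infty hG). destruct hG as (_ & g1 & _). rewrite g1 in H; auto. Qed.

Lemma sklar F : bivariate_distribution F ->
  copula (Cop F) /\ forall x y, Cop F (margin_X F x) (margin_Y F y) = F x y.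
Proof.
  intros HF. pose proof (mgnX F HF) as mX. pose proof (mgnY F HF) as mY.
  pose proof (HD_of _ mX) as DX. pose proof (HD_of _ mY) as DY.
  split.
  - apply copula_of.
    + intros u hu. unfold Cop.
      rewrite (interp_ext _ _ _ (fun _ => 0)).
      * unfold interp; ring.
      * rewrite interp_fix by (apply Lo0; auto). apply Sb_u0; auto. apply DX; auto.
      * rewrite interp_fix by (apply Lo0; auto). apply Sb_u0; auto. apply DX; auto.
    + intros v hv. unfold Cop. rewrite interp_fix by (apply Lo0; auto).
      rewrite (interp_ext _ _ _ (fun _ => 0)).
      * unfold interp; ring.
      * apply Sb_0v; auto. apply DY; auto.
      * apply Sb_0v; auto. apply DY; auto.
    + intros u hu. unfold Cop.
      rewrite (interp_ext _ _ _ (fun k => k)).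
      * apply interp_id. apply DX; auto.
      * rewrite interp_fix by (apply Lo1; auto). apply Sb_u1; auto. apply DX; auto.
      * rewrite interp_fix by (apply Lo1; auto). apply Sb_u1; auto. apply DX; auto.
    + intros v hv. unfold Cop. rewrite interp_fix by (apply Lo1; auto).
      rewrite (interp_ext _ _ _ (fun k => k)).
      * apply interp_id. apply DY; auto.
      * apply Sb_1v; auto. apply DY; auto.
      * apply Sb_1v; auto. apply DY; auto.
    + intros u1 u2 v1 v2 i1 i2 j1 j2 hu hv. unfold Cop.
      set (IY := fun k v => interp (Lo (GY F)) (Hi (GY F)) (fun w => Sb F k w) v).
      set (lX := Lo (GX F)). set (hX := Hi (GX F)).
      assert (E : forall u, interp lX hX (fun k => IY k v2) u - interp lX hX (fun k => IY k v1) u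
                   = interp lX hX (fun k => IY k v2 - IY k v1) u) by (intros; apply interp_lin).
      pose proof (E u1). pose proof (E u2).
      assert (interp lX hX (fun k => IY k v2 - IY k v1) u1 <= interp lX hX (fun k => IY k v2 - IY k v1) u2).
      { apply (interp_mono (cl (GX F))); auto.
        - intros; apply cell; auto.
        - intros k1 k2 c1 c2 hk. unfold IY.
          assert (L : forall v, interp (Lo (GY F)) (Hi (GY F)) (fun w => Sb F k2 w) v
                     - interp (Lo (GY F)) (Hi (GY F)) (fun w => Sb F k1 w) v
                     = interp (Lo (GY F)) (Hi (GY F)) (fun w => Sb F k2 w - Sb F k1 w) v)
            by (intros; apply interp_lin).
          pose proof (L v1). pose proof (L v2).
          assert (interp (Lo (GY F)) (Hi (GY F)) (fun w => Sb F k2 w - Sb F k1 w) v1 <=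
                  interp (Lo (GY F)) (Hi (GY F)) (fun w => Sb F k2 w - Sb F k1 w) v2).
          { apply (interp_mono (cl (GY F))); auto.
            - intros; apply cell; auto.
            - intros w1 w2 e1 e2 hw. pose proof (Sb_2inc F k1 k2 w1 w2 HF c1 c2 e1 e2 hk hw). lra. }
          lra. }
      unfold IY in *. lra.
  - intros x y. unfold Cop, margin_X, margin_Y.
    rewrite interp_fix by (apply (Lo_fix (GX F) x mX)).
    rewrite interp_fix by (apply (Lo_fix (GY F) y mY)).
    apply Sb_range; auto.
Qed.

Definition Ev (K : (R -> R -> R) -> Prop) u v := fun t => exists C, K C /\ t = C u v.
Definition Pinf K : R -> R -> R := fun u v => glbf (Ev K u v).
Definition Qsup K : R -> R -> R := fun u v => lubf (Ev K u v).

Lemma cop_parts C : copula C ->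
  (forall u v, in01 u -> in01 v -> in01 (C u v)) /\
  (forall u, in01 u -> C u 0 = 0) /\ (forall v, in01 v -> C 0 v = 0) /\
  (forall u, in01 u -> C u 1 = u) /\ (forall v, in01 v -> C 1 v = v) /\
  (forall u1 u2 v, in01 u1 -> in01 u2 -> in01 v -> u1 <= u2 -> C u1 v <= C u2 v) /\
  (forall u v1 v2, in01 u -> in01 v1 -> in01 v2 -> v1 <= v2 -> C u v1 <= C u v2) /\
  (forall u1 u2 v1 v2, in01 u1 -> in01 u2 -> in01 v1 -> in01 v2 ->
     Rabs (C u1 v1 - C u2 v2) <= Rabs (u1 - u2) + Rabs (v1 - v2)).
Proof. intros [q _]; exact q. Qed.


Lemma Pinf_spec K u v : (exists C, K C) -> (forall C, K C -> copula C) -> in01 u -> in01 v ->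
  is_glb (Ev K u v) (Pinf K u v).
Proof.
  intros [C0 h0] hK hu hv. apply glbf_spec.
  - exists (C0 u v), C0; auto.
  - exists 0. intros t [C [hC ->]]. destruct (cop_parts C (hK C hC)) as (r & _). apply (r u v hu hv).
Qed.
Lemma Qsup_spec K u v : (exists C, K C) -> (forall C, K C -> copula C) -> in01 u -> in01 v ->
  is_lub (Ev K u v) (Qsup K u v).
Proof.
  intros [C0 h0] hK hu hv. apply lubf_spec.
  - exists (C0 u v), C0; auto.
  - exists 1. intros t [C [hC ->]]. destruct (cop_parts C (hK C hC)) as (r & _). apply (r u v hu hv).
Qed.

Lemma P_le K C u v : (exists C, K C) -> (forall C, K C -> copula C) -> in01 u -> in01 v ->
  K C -> Pinf K u v <= C u v.
Proof. intros a b c d e. apply (proj1 (Pinf_spec K u v a b c d)). exists C; auto. Qed.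
Lemma P_ge K b u v : (exists C, K C) -> (forall C, K C -> copula C) -> in01 u -> in01 v ->
  (forall C, K C -> b <= C u v) -> b <= Pinf K u v.
Proof. intros a c d e f. apply (proj2 (Pinf_spec K u v a c d e)). intros t [C [hC ->]]; auto. Qed.
Lemma Q_ge K C u v : (exists C, K C) -> (forall C, K C -> copula C) -> in01 u -> in01 v ->
  K C -> C u v <= Qsup K u v.
Proof. intros a b c d e. apply (proj1 (Qsup_spec K u v a b c d)). exists C; auto. Qed.
Lemma Q_le K b u v : (exists C, K C) -> (forall C, K C -> copula C) -> in01 u -> in01 v ->
  (forall C, K C -> C u v <= b) -> Qsup K u v <= b.
Proof. intros a c d e f. apply (proj2 (Qsup_spec K u v a c d e)). intros t [C [hC ->]]; auto. Qed.

Lemma Pinf_qc K : (exists C, K C) -> (forall C, K C -> copula C) -> quasi_copula (Pinf K).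
Proof.
  intros hn hK. destruct hn as [C0 h0] eqn:Ehn.
  destruct (cop_parts C0 (hK C0 h0)) as (r0 & a0 & b0 & c0 & d0 & e0 & f0 & g0).
  assert (I0 : in01 0) by (unfold in01; lra). assert (I1 : in01 1) by (unfold in01; lra).
  split; [|split; [|split; [|split; [|split; [|split; [|split]]]]]].
  - intros u v hu hv. split.
    + apply P_ge; auto. intros C hC. destruct (cop_parts C (hK C hC)) as (r & _). apply r; auto.
    + pose proof (P_le K C0 u v hn hK hu hv h0). pose proof (r0 u v hu hv). unfold in01 in *; lra.
  - intros u hu. apply Rle_antisym.
    + pose proof (P_le K C0 u 0 hn hK hu I0 h0) as E. rewrite a0 in E by auto. lra.
    + apply P_ge; auto. intros C hC. destruct (cop_parts C (hK C hC)) as (r & a & _). rewrite a; auto; lra.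
  - intros u hu. apply Rle_antisym.
    + pose proof (P_le K C0 0 u hn hK I0 hu h0) as E. rewrite b0 in E by auto. lra.
    + apply P_ge; auto. intros C hC. destruct (cop_parts C (hK C hC)) as (r & a & b & _). rewrite b; auto; lra.
  - intros u hu. apply Rle_antisym.
    + pose proof (P_le K C0 u 1 hn hK hu I1 h0) as E. rewrite c0 in E by auto. lra.
    + apply P_ge; auto. intros C hC. destruct (cop_parts C (hK C hC)) as (r & a & b & c & _). rewrite c; auto; lra.
  - intros u hu. apply Rle_antisym.
    + pose proof (P_le K C0 1 u hn hK I1 hu h0) as E. rewrite d0 in E by auto. lra.
    + apply P_ge; auto. intros C hC. destruct (cop_parts C (hK C hC)) as (r & a & b & c & d & _). rewrite d; auto; lra.
  - intros u1 u2 v h1 h2 hv le. apply P_ge; auto. intros C hC.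
    destruct (cop_parts C (hK C hC)) as (r & a & b & c & d & e & _).
    pose proof (P_le K C u1 v hn hK h1 hv hC). pose proof (e u1 u2 v h1 h2 hv le). lra.
  - intros u v1 v2 hu h1 h2 le. apply P_ge; auto. intros C hC.
    destruct (cop_parts C (hK C hC)) as (r & a & b & c & d & e & f & _).
    pose proof (P_le K C u v1 hn hK hu h1 hC). pose proof (f u v1 v2 hu h1 h2 le). lra.
  - intros u1 u2 v1 v2 i1 i2 j1 j2. apply le_abs. split.
    + assert (Pinf K u2 v2 - (Rabs (u1 - u2) + Rabs (v1 - v2)) <= Pinf K u1 v1); [|lra].
      apply P_ge; auto. intros C hC.
      destruct (cop_parts C (hK C hC)) as (r & a & b & c & d & e & f & g).
      pose proof (P_le K C u2 v2 hn hK i2 j2 hC). pose proof (abs_le _ _ (g u1 u2 v1 v2 i1 i2 j1 j2)). lra.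
    + assert (Pinf K u1 v1 - (Rabs (u1 - u2) + Rabs (v1 - v2)) <= Pinf K u2 v2); [|lra].
      apply P_ge; auto. intros C hC.
      destruct (cop_parts C (hK C hC)) as (r & a & b & c & d & e & f & g).
      pose proof (P_le K C u1 v1 hn hK i1 j1 hC). pose proof (abs_le _ _ (g u1 u2 v1 v2 i1 i2 j1 j2)). lra.
Qed.

Lemma Qsup_qc K : (exists C, K C) -> (forall C, K C -> copula C) -> quasi_copula (Qsup K).
Proof.
  intros hn hK. destruct hn as [C0 h0] eqn:Ehn.
  destruct (cop_parts C0 (hK C0 h0)) as (r0 & a0 & b0 & c0 & d0 & e0 & f0 & g0).
  assert (I0 : in01 0) by (unfold in01; lra). assert (I1 : in01 1) by (unfold in01; lra).
  split; [|split; [|split; [|split; [|split; [|split; [|split]]]]]].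
  - intros u v hu hv. split.
    + pose proof (Q_ge K C0 u v hn hK hu hv h0). pose proof (r0 u v hu hv). unfold in01 in *; lra.
    + apply Q_le; auto. intros C hC. destruct (cop_parts C (hK C hC)) as (r & _). apply r; auto.
  - intros u hu. apply Rle_antisym.
    + apply Q_le; auto. intros C hC. destruct (cop_parts C (hK C hC)) as (r & a & _). rewrite a; auto; lra.
    + pose proof (Q_ge K C0 u 0 hn hK hu I0 h0) as E. rewrite a0 in E by auto. lra.
  - intros u hu. apply Rle_antisym.
    + apply Q_le; auto. intros C hC. destruct (cop_parts C (hK C hC)) as (r & a & b & _). rewrite b; auto; lra.
    + pose proof (Q_ge K C0 0 u hn hK I0 hu h0) as E. rewrite b0 in E by auto. lra.
  - intros u hu. apply Rle_antisym.
    + apply Q_le; auto. intros C hC. destruct (cop_parts C (hK C hC)) as (r & a & b & c & _). rewrite c; auto; lra.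
    + pose proof (Q_ge K C0 u 1 hn hK hu I1 h0) as E. rewrite c0 in E by auto. lra.
  - intros u hu. apply Rle_antisym.
    + apply Q_le; auto. intros C hC. destruct (cop_parts C (hK C hC)) as (r & a & b & c & d & _). rewrite d; auto; lra.
    + pose proof (Q_ge K C0 1 u hn hK I1 hu h0) as E. rewrite d0 in E by auto. lra.
  - intros u1 u2 v h1 h2 hv le. apply Q_le; auto. intros C hC.
    destruct (cop_parts C (hK C hC)) as (r & a & b & c & d & e & _).
    pose proof (Q_ge K C u2 v hn hK h2 hv hC). pose proof (e u1 u2 v h1 h2 hv le). lra.
  - intros u v1 v2 hu h1 h2 le. apply Q_le; auto. intros C hC.
    destruct (cop_parts C (hK C hC)) as (r & a & b & c & d & e & f & _).
    pose proof (Q_ge K C u v2 hn hK hu h2 hC). pose proof (f u v1 v2 hu h1 h2 le). lra.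
  - intros u1 u2 v1 v2 i1 i2 j1 j2. apply le_abs. split.
    + assert (Qsup K u2 v2 <= Qsup K u1 v1 + (Rabs (u1 - u2) + Rabs (v1 - v2))); [|lra].
      apply Q_le; auto. intros C hC.
      destruct (cop_parts C (hK C hC)) as (r & a & b & c & d & e & f & g).
      pose proof (Q_ge K C u1 v1 hn hK i1 j1 hC). pose proof (abs_le _ _ (g u1 u2 v1 v2 i1 i2 j1 j2)). lra.
    + assert (Qsup K u1 v1 <= Qsup K u2 v2 + (Rabs (u1 - u2) + Rabs (v1 - v2))); [|lra].
      apply Q_le; auto. intros C hC.
      destruct (cop_parts C (hK C hC)) as (r & a & b & c & d & e & f & g).
      pose proof (Q_ge K C u2 v2 hn hK i2 j2 hC). pose proof (abs_le _ _ (g u1 u2 v1 v2 i1 i2 j1 j2)). lra.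
Qed.

Lemma PQ_coherent K : (exists C, K C) -> (forall C, K C -> copula C) ->
  coherent_imprecise_copula (Pinf K) (Qsup K).
Proof.
  intros hn hK. destruct hn as [C0 h0] eqn:Ehn.
  assert (Btw : forall C, K C -> copulas_between (Pinf K) (Qsup K) C).
  { intros C hC. split; [auto|split].
    - intros u v hu hv. apply P_le; auto.
    - intros u v hu hv. apply Q_ge; auto. }
  split; [apply Pinf_qc; auto|split; [apply Qsup_qc; auto|split; [|split]]].
  - intros u v hu hv. pose proof (P_le K C0 u v hn hK hu hv h0). pose proof (Q_ge K C0 u v hn hK hu hv h0). lra.
  - intros u v hu hv. split.
    + intros t [C [[_ [hP _]] ->]]. apply hP; auto.
    + intros b hb. apply P_ge; auto. intros C hC. apply hb. exists C; split; auto.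
  - intros u v hu hv. split.
    + intros t [C [[_ [_ hQ]] ->]]. apply hQ; auto.
    + intros b hb. apply Q_le; auto. intros C hC. apply hb. exists C; split; auto.
Qed.

Definition Kf (Fam : (Rbar -> Rbar -> R) -> Prop) (FX FY : Rbar -> R) (C : R -> R -> R) : Prop :=
  exists F, Fam F /\ margin_X F = FX /\ margin_Y F = FY /\ C = Cop F.

Lemma glb_ext E1 E2 m : (forall t, E1 t <-> E2 t) -> is_glb E1 m -> is_glb E2 m.
Proof.
  intros h [a b]. split.
  - intros x hx; apply a, h, hx.
  - intros c hc; apply b. intros x hx; apply hc, h, hx.
Qed.
Lemma lub_ext E1 E2 m : (forall t, E1 t <-> E2 t) -> is_lub E1 m -> is_lub E2 m.
Proof.
  intros h [a b]. split.
  - intros x hx; apply a, h, hx.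
  - intros c hc; apply b. intros x hx; apply hc, h, hx.
Qed.

Theorem theorem14 :
  (* (i) *)
  (forall (Fam : (Rbar -> Rbar -> R) -> Prop),
     (exists F, Fam F) ->
     (forall F, Fam F -> bivariate_distribution F) ->
     exists PQ : (Rbar -> R) * (Rbar -> R) -> (R -> R -> R) * (R -> R -> R),
       forall FX FY : Rbar -> R,
         (exists F, Fam F /\ margin_X F = FX /\ margin_Y F = FY) ->
         coherent_imprecise_copula (fst (PQ (FX, FY))) (snd (PQ (FX, FY))) /\
         (forall x y,
            is_glb (fun t => exists F, Fam F /\ margin_X F = FX /\ margin_Y F = FY /\ t = F x y)
                   (fst (PQ (FX, FY)) (FX x) (FY y))) /\
         (forall x y,
            is_lub (fun t => exists F, Fam F /\ margin_X F = FX /\ margin_Y F = FY /\ t = F x y)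
                   (snd (PQ (FX, FY)) (FX x) (FY y))))
  /\
  (* (ii) *)
  (forall (FamX FamY : (Rbar -> R) -> Prop)
          (FamXY : (Rbar -> R) -> (Rbar -> R) -> Prop)
          (PQ : (Rbar -> R) -> (Rbar -> R) -> (R -> R -> R) * (R -> R -> R)),
     (exists G, FamX G) -> (forall G, FamX G -> univariate_distribution G) ->
     (exists G, FamY G) -> (forall G, FamY G -> univariate_distribution G) ->
     (forall FX FY, FamXY FX FY -> FamX FX /\ FamY FY) ->
     (exists FX FY, FamXY FX FY) ->
     (forall FX FY, FamXY FX FY ->
        coherent_imprecise_copula (fst (PQ FX FY)) (snd (PQ FX FY))) ->
     let Fam := fun F : Rbar -> Rbar -> R =>
       exists FX FY C, FamXY FX FY /\
         copulas_between (fst (PQ FX FY)) (snd (PQ FX FY)) C /\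
         F = compose_copula C FX FY in
     (exists F, Fam F) /\ (forall F, Fam F -> bivariate_distribution F)).
Proof.
  split.
  - intros Fam _ hB.
    exists (fun p => (Pinf (Kf Fam (fst p) (snd p)), Qsup (Kf Fam (fst p) (snd p)))).
    intros FX FY [F0 [h0 [ex ey]]]. simpl.
    assert (hn : exists C, Kf Fam FX FY C) by (exists (Cop F0), F0; auto).
    assert (hK : forall C, Kf Fam FX FY C -> copula C).
    { intros C [F [hF [_ [_ ->]]]]. apply (sklar F (hB F hF)). }
    assert (R01 : forall x y, in01 (FX x) /\ in01 (FY y)).
    { intros x y. destruct (biv_facts F0 (hB F0 h0)) as (_ & _ & _ & _ & _ & f).
      rewrite <- ex, <- ey. unfold margin_X, margin_Y, in01. auto. }
    assert (EQ : forall x y t, (exists F, Fam F /\ margin_X F = FX /\ margin_Y F = FY /\ t = F x y)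
                     <-> Ev (Kf Fam FX FY) (FX x) (FY y) t).
    { intros x y t. split.
      - intros [F [hF [mx [my ->]]]]. exists (Cop F). split; [exists F; auto|].
        rewrite <- mx, <- my. symmetry. apply (sklar F (hB F hF)).
      - intros [C [[F [hF [mx [my ->]]]] ->]]. exists F. repeat split; auto.
        rewrite <- mx, <- my. apply (sklar F (hB F hF)). }
    split; [apply PQ_coherent; auto|split].
    + intros x y. destruct (R01 x y). eapply glb_ext; [|apply Pinf_spec; auto].
      intros t; symmetry; apply EQ.
    + intros x y. destruct (R01 x y). eapply lub_ext; [|apply Qsup_spec; auto].
      intros t; symmetry; apply EQ.
  - intros FamX FamY FamXY PQ _ hX _ hY hXY [FX [FY h]] hcoh Fam. split.
    + destruct (hcoh FX FY h) as (_ & _ & _ & _ & hl).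
      assert (I0 : in01 0) by (unfold in01; lra).
      destruct (classic (exists C, copulas_between (fst (PQ FX FY)) (snd (PQ FX FY)) C)) as [[C hC]|N].
      * exists (compose_copula C FX FY), FX, FY, C. auto.
      * exfalso. destruct (hl 0 0 I0 I0) as [_ b].
        assert (snd (PQ FX FY) 0 0 <= snd (PQ FX FY) 0 0 - 1); [|lra].
        apply b. intros t [C [hC _]]. exfalso; apply N; eauto.
    + intros F [GX0 [GY0 [C [hg [[hC _] ->]]]]].
      destruct (hXY _ _ hg) as [ux uy]. apply hX in ux. apply hY in uy.
      destruct ux as (xr & xm & x0 & x1). destruct uy as (yr & ym & y0 & y1).
      destruct (cop_parts C hC) as (r & a & b & c & d & _).
      unfold compose_copula. split; [|split; [|split; [|split]]].
      * intros x y. apply r; apply xr || apply yr.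
      * intros x. rewrite y0. apply a. apply xr.
      * intros y. rewrite x0. apply b. apply yr.
      * rewrite x1, y1. apply c. unfold in01; lra.
      * intros x1' x2' y1' y2' lx ly. apply (proj2 hC); try apply xr; try apply yr; auto.
Qed.
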